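(* Let $G$ be a simple connected graph. Then the following statements are equivalent: (i) $G\in\Gamma_{\leq 1}$, i.e. $\gamma(G)\le 1$; (ii) $G$ is $P_3$-free, i.e. no induced subgraph of $G$ is isomorphic to the path $P_3$ on three vertices; (iii) $G$ is a complete graph.
   Context: For a finite graph $G$ and indeterminates $X_G=\{x_u : u\in V(G)\}$, the generalized Laplacian matrix $L(G,X_G)$ is the $V(G)\times V(G)$ matrix over $\mathbb{Z}[X_G]$ whose $(u,u)$-entry is $x_u$ and whose $(u,v)$-entry for $u\neq v$ is $-m_{uv}$, where $m_{uv}$ is the number of edges between $u$ and $v$. For $1\le i\le |V(G)|$ the $i$-th critical ideal $I_i(G,X_G)$ is the ideal of $\mathbb{Z}[X_G]$ generated by all $i\times i$ minors of $L(G,X_G)$; by convention $I_i(G,X_G)=\langle 1\rangle$ for $i<1$ and $\langle 0\rangle$ for $i>|V(G)|$. The algebraic co-rank $\gamma(G)$ is the number of critical ideals of $G$ equal to $\langle 1\rangle$. $\Gamma_{\le k}$ denotes the set of simple connected graphs $G$ with $\gamma(G)\le k$. *)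

(* Defs.v *)
From mathcomp Require Import all_boot all_order all_algebra.
From mathcomp Require Import mpoly.
From Stdlib Require Import ClassicalDescription.
Set Implicit Arguments. Unset Strict Implicit. Unset Printing Implicit Defensive.
Import GRing.Theory.
Local Open Scope ring_scope.

Definition simple_graph (n : nat) (e : rel 'I_n) : Prop :=
  ssrbool.symmetric e /\ ssrbool.irreflexive e.

Definition graph_connected (n : nat) (e : rel 'I_n) : Prop :=
  forall u v : 'I_n, connect e u v.

(* Generalized Laplacian L(G, X_G) over Z[x_0,...,x_{n-1}] (m_uv = 0 or 1). *)
Definition gen_laplacian (n : nat) (e : rel 'I_n) : 'M[{mpoly int[n]}]_n :=
  \matrix_(u, v) (if u == v then 'X_u else - ((e u v : nat)%:R)).

Definition strictly_increasing (n k : nat) (f : {ffun 'I_k -> 'I_n}) : bool :=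
  [forall i : 'I_k, forall j : 'I_k, (i < j)%N ==> (f i < f j)%N].

Definition minor (R : comRingType) (n k : nat) (A : 'M[R]_n)
  (f g : {ffun 'I_k -> 'I_n}) : R :=
  \det (\matrix_(i, j) A (f i) (g j)).

Definition minors_ideal_is_one (R : comRingType) (n k : nat) (A : 'M[R]_n) : Prop :=
  exists c : {ffun ({ffun 'I_k -> 'I_n} * {ffun 'I_k -> 'I_n}) -> R},
    \sum_(p | strictly_increasing p.1 && strictly_increasing p.2)
        c p * minor A p.1 p.2 = 1.

Definition critical_ideal_trivial (n : nat) (e : rel 'I_n) (k : nat) : Prop :=
  minors_ideal_is_one k (gen_laplacian e).

Definition pbool (P : Prop) : bool :=
  if excluded_middle_informative P then true else false.

Definition algebraic_corank (n : nat) (e : rel 'I_n) : nat :=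
  #|[set k : 'I_n | pbool (critical_ideal_trivial e k.+1) ]|.

Definition P3_adj : rel 'I_3 := fun i j => (i.+1 == j :> nat) || (j.+1 == i :> nat).

Definition has_induced_P3 (n : nat) (e : rel 'I_n) : Prop :=
  exists f : 'I_3 -> 'I_n, injective f /\ forall i j, e (f i) (f j) = P3_adj i j.

Definition P3_free (n : nat) (e : rel 'I_n) : Prop := ~ has_induced_P3 e.

Definition complete_graph (n : nat) (e : rel 'I_n) : Prop :=
  forall u v : 'I_n, u != v -> e u v.

(* Main.v *)
Require Import Defs.
From mathcomp Require Import all_boot all_order all_algebra.
From mathcomp Require Import mpoly.
From mathcomp Require Import ring.
From Stdlib Require Import ClassicalDescription.
Set Implicit Arguments. Unset Strict Implicit. Unset Printing Implicit Defensive.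
Import GRing.Theory.
Local Open Scope ring_scope.

Lemma det22 (R : comRingType) (A : 'M[R]_2) : \det A = A 0 0 * A 1 1 - A 0 1 * A 1 0.
Proof.
rewrite (expand_det_row _ 0) !big_ord_recl big_ord0 /cofactor !det_mx11 /=.
rewrite addr0 !mxE /= expr0 expr1 !mul1r.
rewrite mulN1r mulrN; congr (A _ _ * A _ _ - A _ _ * A _ _); exact/val_inj.
Qed.

Lemma ideal_of_unit (R : comRingType) n k (A : 'M[R]_n) (f g : {ffun 'I_k -> 'I_n}) u :
  strictly_increasing f -> strictly_increasing g -> u * minor A f g = 1 ->
  minors_ideal_is_one k A.
Proof.
move=> sf sg hu.
exists [ffun p => if p == (f, g) then u else 0].
rewrite (bigD1 (f, g)) /=; last by rewrite sf sg.
rewrite ffunE eqxx big1 ?addr0 // => p /andP [_ hp].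
by rewrite ffunE (negbTE hp) mul0r.
Qed.

Definition pair2 n (a b : 'I_n) : {ffun 'I_2 -> 'I_n} :=
  finfun (fun i : 'I_2 => if val i == 0%N then a else b).

Lemma pair2_inc n (a b : 'I_n) : (a < b)%N -> strictly_increasing (pair2 a b).
Proof.
move=> ab; apply/forallP => i; apply/forallP => j; apply/implyP.
rewrite !ffunE.
by case: i => [[|[|?]] ?]; case: j => [[|[|?]] ?].
Qed.

Lemma minor_pair2 (R : comRingType) n (A : 'M[R]_n) a b c d :
  minor A (pair2 a b) (pair2 c d) = A a c * A b d - A a d * A b c.
Proof. by rewrite /minor det22 !mxE !ffunE. Qed.

Lemma ideal2 (R : comRingType) n (A : 'M[R]_n) r1 r2 c1 c2 :
  r1 != r2 -> c1 != c2 -> A r1 c1 * A r2 c2 - A r1 c2 * A r2 c1 = 1 ->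
  minors_ideal_is_one 2 A.
Proof.
move=> hr hc hD.
have hr' : (r1 < r2)%N \/ (r2 < r1)%N.
  by case: (ltngtP r1 r2) => //; [left|right|move=> /val_inj/eqP; rewrite (negbTE hr)].
have hc' : (c1 < c2)%N \/ (c2 < c1)%N.
  by case: (ltngtP c1 c2) => //; [left|right|move=> /val_inj/eqP; rewrite (negbTE hc)].
case: hr' => hr'; case: hc' => hc'.
- by apply: (ideal_of_unit (u := 1) (pair2_inc hr') (pair2_inc hc')); rewrite minor_pair2 mul1r.
- apply: (ideal_of_unit (u := -1) (pair2_inc hr') (pair2_inc hc')); rewrite minor_pair2; apply: (etrans _ hD); ring.
- apply: (ideal_of_unit (u := -1) (pair2_inc hr') (pair2_inc hc')); rewrite minor_pair2; apply: (etrans _ hD); ring.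
- apply: (ideal_of_unit (u := 1) (pair2_inc hr') (pair2_inc hc')); rewrite minor_pair2; apply: (etrans _ hD); ring.
Qed.

Definition single n (a : 'I_n) : {ffun 'I_1 -> 'I_n} := finfun (fun _ : 'I_1 => a).

Lemma single_inc n (a : 'I_n) : strictly_increasing (single a).
Proof.
by apply/forallP => i; apply/forallP => j; apply/implyP; case: i => [[|?] ?]; case: j => [[|?] ?].
Qed.

Lemma ideal1 (R : comRingType) n (A : 'M[R]_n) a b u :
  u * A a b = 1 -> minors_ideal_is_one 1 A.
Proof.
move=> h; apply: (ideal_of_unit (u := u) (single_inc a) (single_inc b)).
by rewrite /minor det_mx11 !mxE !ffunE.
Qed.

Lemma complete_P3_free n (e : rel 'I_n) : complete_graph e -> P3_free e.
Proof.
move=> hc [f [finj hf]].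
have h02 : f (@Ordinal 3 0 isT) != f (@Ordinal 3 2 isT).
  by apply/negP => /eqP /finj.
by move: (hc _ _ h02); rewrite hf.
Qed.

Lemma P3_free_complete n (e : rel 'I_n) :
  simple_graph e -> graph_connected e -> P3_free e -> complete_graph e.
Proof.
move=> [hsym hirr] hcon hfree.
pose R x y := (x == y) || e x y.
have tr : forall x y z, R x y -> R y z -> R x z.
  move=> x y z; rewrite /R.
  case: (eqVneq x y) => [<- //|nxy] /= exy.
  case: (eqVneq y z) => [<-|nyz] /=; first by rewrite exy orbT.
  move=> eyz.
  case: (eqVneq x z) => [//|nxz] /=.
  case exz: (e x z) => //; exfalso; apply: hfree.
  pose f := fun i : 'I_3 => if val i == 0%N then x else if val i == 1%N then y else z.
  exists f; split.
    move=> i j; rewrite /f.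
    case: i => [[|[|[|?]]] ?]; case: j => [[|[|[|?]]] ?] //= h; try exact/val_inj;
    move: nxy nyz nxz; rewrite ?h ?eqxx //.
  move=> i j; rewrite /f /P3_adj.
  case: i => [[|[|[|?]]] ?]; case: j => [[|[|[|?]]] ?] //=;
    rewrite ?hirr ?exy ?eyz ?exz // ?(hsym y x) ?(hsym z y) ?(hsym z x) ?exy ?eyz ?exz //.
have hR : forall u v, connect e u v -> R u v.
  move=> u v /connectP [p hp ->] {v}.
  elim: p u hp => [|w p IH] u /=; first by rewrite /R eqxx.
  move=> /andP [euw hp]; apply: (tr _ w); first by rewrite /R euw orbT.
  exact: IH.
move=> u v nuv; move: (hR u v (hcon u v)); by rewrite /R (negbTE nuv).
Qed.

Lemma pboolT (P : Prop) : P -> pbool P = true.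
Proof. by rewrite /pbool; case: excluded_middle_informative. Qed.

Lemma pboolF (P : Prop) : ~ P -> pbool P = false.
Proof. by rewrite /pbool; case: excluded_middle_informative. Qed.

Lemma complete_not_trivial n (e : rel 'I_n) m :
  complete_graph e -> ~ critical_ideal_trivial e m.+2.
Proof.
move=> hc [c hsum].
pose v := fun _ : 'I_n => (-1 : int).
have := congr1 (meval v) hsum.
rewrite rmorph1 rmorph_sum /= big1 //.
move=> p _; rewrite rmorphM /= /minor -det_map_mx.
rewrite (@determinant_alternate _ _ _ (0 : 'I_m.+2) 1) ?mulr0 //.
move=> j; rewrite !mxE.
have hL : forall a b : 'I_n, meval v (if a == b then 'X_a else - ((e a b : nat)%:R)) = -1.
  move=> a b.
  case: (eqVneq a b) => [_|nab]; first by rewrite mevalXU.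
  by rewrite hc // mevalN /= mevalC.
exact: (etrans (hL _ _) (esym (hL _ _))).
Qed.

Lemma complete_corank n (e : rel 'I_n) :
  complete_graph e -> (algebraic_corank e <= 1)%N.
Proof.
move=> hc; apply/card_le1_eqP => x y; rewrite !inE.
have H : forall z : 'I_n, pbool (critical_ideal_trivial e z.+1) -> val z = 0%N.
  move=> [[|m] hm] //=; by rewrite pboolF //; apply: complete_not_trivial.
by move=> /H hx /H hy; apply/val_inj; rewrite hx hy.
Qed.

Lemma P3_corank n (e : rel 'I_n) :
  simple_graph e -> has_induced_P3 e -> (1 < algebraic_corank e)%N.
Proof.
move=> [hsym hirr] [f [finj hf]].
have hn : (3 <= n)%N.
  by have := @leq_card _ _ f finj; rewrite !card_ord.
set a := f (@Ordinal 3 0 isT); set b := f (@Ordinal 3 1 isT); set d := f (@Ordinal 3 2 isT).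
have eab : e a b by rewrite /a /b hf.
have ebd : e b d by rewrite /b /d hf.
have ead : e a d = false by rewrite /a /d hf.
have nab : a != b by apply/negP => /eqP /finj.
have nbd : b != d by apply/negP => /eqP /finj.
have t1 : critical_ideal_trivial e 1.
  apply: (@ideal1 _ _ _ a b (-1)).
  by rewrite /gen_laplacian mxE (negbTE nab) eab mulrNN mul1r.
have t2 : critical_ideal_trivial e 2.
  apply: (@ideal2 _ _ _ a b b d nab nbd).
  have nad : a != d by apply/negP => /eqP /finj.
  rewrite /gen_laplacian !mxE (negbTE nab) (negbTE nbd) (negbTE nad) eab ebd ead /=.
  by rewrite mulrNN mul1r oppr0 mul0r subr0.
have h0 : (0 < n)%N by apply: leq_trans hn.
have h1 : (1 < n)%N by apply: leq_trans hn.
have sub : [set Ordinal h0; Ordinal h1] \subset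
   [set k : 'I_n | pbool (critical_ideal_trivial e k.+1)].
  apply/subsetP => x; rewrite !inE => /orP [] /eqP -> /=; exact: pboolT.
have := subset_leq_card sub.
rewrite cards2.
have neq : (Ordinal h0 != Ordinal h1) by apply/eqP => /(congr1 val).
by rewrite neq.
Qed.

Theorem theorem3p3 (n : nat) (e : rel 'I_n) :
  simple_graph e -> graph_connected e ->
  ((algebraic_corank e <= 1)%N <-> P3_free e) /\
  (P3_free e <-> complete_graph e).
Proof.
move=> hs hc; split; split.
- move=> hle hP; have := P3_corank hs hP; by rewrite ltnNge hle.
- by move=> hf; apply: complete_corank; apply: P3_free_complete.
- exact: P3_free_complete.
- exact: complete_P3_free.
Qed.
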